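(* On any non-atomic probability space $(\mathbb{X},\mathcal{X},\mu)$ with an invertible measure-preserving ergodic transformation $T$, there exists a finite measurable function $f:\mathbb{X}\to\mathbb{R}$ such that, $\mu$-a.e., $$\limsup_n A_n^+f=+\infty,\qquad \liminf_n A_n^+f=-\infty,\qquad \lim_n A_n^-f=+\infty.$$
   Context: For measurable $f:\mathbb{X}\to\mathbb{R}$ and $n\ge1$: $A_n^+f=\frac1n\sum_{i=0}^{n-1}f\circ T^i$ and $A_n^-f=\frac1n\sum_{i=0}^{n-1}f\circ T^{-i}$. *)

(* Defs.v *)
From Stdlib Require Import Reals.
Open Scope R_scope.

Definition set (X : Type) := X -> Prop.

Definition sigma_algebra {X : Type} (M : set X -> Prop) : Prop :=
  M (fun _ => True) /\
  (forall A, M A -> M (fun x => ~ A x)) /\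
  (forall A : nat -> set X, (forall n, M (A n)) -> M (fun x => exists n, A n x)).

Definition probability_measure {X : Type} (M : set X -> Prop) (mu : set X -> R) : Prop :=
  (forall A, M A -> 0 <= mu A) /\
  mu (fun _ => True) = 1 /\
  (forall A : nat -> set X,
     (forall n, M (A n)) ->
     (forall i j x, i <> j -> A i x -> A j x -> False) ->
     infinite_sum (fun n => mu (A n)) (mu (fun x => exists n, A n x))).

Definition non_atomic {X : Type} (M : set X -> Prop) (mu : set X -> R) : Prop :=
  forall A, M A -> 0 < mu A ->
    exists B, M B /\ (forall x, B x -> A x) /\ 0 < mu B /\ mu B < mu A.

Definition measurable_map {X : Type} (M : set X -> Prop) (T : X -> X) : Prop :=
  forall A, M A -> M (fun x => A (T x)).

Definition invertible_with {X : Type} (M : set X -> Prop) (T Tinv : X -> X) : Prop :=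
  (forall x, T (Tinv x) = x) /\ (forall x, Tinv (T x) = x) /\
  measurable_map M T /\ measurable_map M Tinv.

Definition measure_preserving {X : Type} (M : set X -> Prop) (mu : set X -> R) (T : X -> X) : Prop :=
  forall A, M A -> mu (fun x => A (T x)) = mu A.

Definition ergodic {X : Type} (M : set X -> Prop) (mu : set X -> R) (T : X -> X) : Prop :=
  forall A, M A -> (forall x, A (T x) <-> A x) -> mu A = 0 \/ mu A = 1.

Definition measurable_fun {X : Type} (M : set X -> Prop) (f : X -> R) : Prop :=
  forall a : R, M (fun x => f x <= a).

Definition ae {X : Type} (M : set X -> Prop) (mu : set X -> R) (P : X -> Prop) : Prop :=
  exists N, M N /\ mu N = 0 /\ forall x, ~ N x -> P x.

Fixpoint birk_sum {X : Type} (S : X -> X) (f : X -> R) (n : nat) (x : X) : R :=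
  match n with
  | O => 0
  | Datatypes.S k => birk_sum S f k x + f (Nat.iter k S x)
  end.

(* ergodic average (1/n) sum_{i<n} f (S^i x); A_n^+ with S = T, A_n^- with S = T^{-1} *)
Definition avg {X : Type} (S : X -> X) (f : X -> R) (n : nat) (x : X) : R :=
  birk_sum S f n x / INR n.

(* Main.v *)
Require Import Defs.
From Stdlib Require Import Reals Lra Lia Arith Classical ClassicalEpsilon FunctionalExtensionality PropExtensionality.
Open Scope R_scope.

Lemma set_ext {X : Type} (A B : set X) : (forall x, A x <-> B x) -> A = B.
Proof. intros H; apply functional_extensionality; intro x; apply propositional_extensionality; auto. Qed.

Lemma isum_le (a : nat -> R) l S : infinite_sum a l -> (forall n, sum_f_R0 a n <= S) -> l <= S.
Proof.
  intros Hl HS. destruct (Rle_dec l S) as [|Hn]; auto.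
  destruct (Hl (l - S)) as [N HN]; [lra|].
  specialize (HN N (le_n _)). specialize (HS N). unfold Rdist in HN.
  apply Rabs_def2 in HN. lra.
Qed.

Lemma isum_ev (a : nat -> R) N c : (forall n, (n >= N)%nat -> sum_f_R0 a n = c) -> infinite_sum a c.
Proof.
  intros H eps He. exists N. intros n Hn. rewrite H by auto. unfold Rdist. rewrite Rminus_diag, Rabs_R0. lra.
Qed.

Section Meas.
Variables (X : Type) (M : set X -> Prop) (mu : set X -> R).
Hypothesis HM : sigma_algebra M.
Hypothesis Hmu : probability_measure M mu.

Lemma M_ext (A B : set X) : M A -> (forall x, A x <-> B x) -> M B.
Proof. intros HA H. rewrite <- (set_ext A B H). auto. Qed.
Lemma M_True : M (fun _ => True). Proof. apply HM. Qed.
Lemma M_not A : M A -> M (fun x => ~ A x). Proof. apply HM. Qed.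
Lemma M_ex (A : nat -> set X) : (forall n, M (A n)) -> M (fun x => exists n, A n x).
Proof. apply HM. Qed.
Lemma M_False : M (fun _ => False).
Proof. apply (M_ext _ _ (M_not _ M_True)). tauto. Qed.
Lemma M_all (A : nat -> set X) : (forall n, M (A n)) -> M (fun x => forall n, A n x).
Proof.
  intros H. apply (M_ext (fun x => ~ exists n, ~ A n x)).
  - apply M_not, M_ex. intro n; apply M_not, H.
  - intro x; split.
    + intros Hx n. apply NNPP. intro Hn. apply Hx. eauto.
    + intros Hx [n Hn]. auto.
Qed.
Lemma M_or A B : M A -> M B -> M (fun x => A x \/ B x).
Proof.
  intros HA HB. apply (M_ext (fun x => exists n, (match n with O => A | _ => B end) x)).
  - apply M_ex. intros [|n]; auto.
  - intro x; split. + intros [[|n] Hn]; auto. + intros [H|H]; [exists O|exists 1%nat]; auto.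
Qed.
Lemma M_and A B : M A -> M B -> M (fun x => A x /\ B x).
Proof.
  intros HA HB. apply (M_ext (fun x => ~ (~ A x \/ ~ B x))).
  - apply M_not, M_or; apply M_not; auto.
  - intro x; tauto.
Qed.
Lemma M_const (P : Prop) : M (fun _ => P).
Proof.
  destruct (classic P) as [H|H].
  - apply (M_ext _ _ M_True). tauto.
  - apply (M_ext _ _ M_False). tauto.
Qed.
Lemma M_impl A B : M A -> M B -> M (fun x => A x -> B x).
Proof.
  intros HA HB. apply (M_ext (fun x => ~ A x \/ B x)). apply M_or; auto. apply M_not; auto.
  intro x; tauto.
Qed.
Lemma M_exn (A : nat -> set X) : (forall n, M (A n)) -> M (fun x => exists n, A n x).
Proof. apply M_ex. Qed.

Lemma mu_ge0 A : M A -> 0 <= mu A. Proof. apply Hmu. Qed.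
Lemma mu_ext A B : (forall x, A x <-> B x) -> mu A = mu B.
Proof. intro H; rewrite (set_ext A B H); auto. Qed.

Lemma mu_empty : mu (fun _ => False) = 0.
Proof.
  destruct Hmu as [_ [_ Hc]].
  specialize (Hc (fun _ _ => False) (fun _ => M_False) ltac:(intros; tauto)).
  cbv beta in Hc.
  rewrite (mu_ext (fun x => exists n : nat, False) (fun _ => False)) in Hc
    by (intro; split; [intros [_ []]| tauto]).
  set (c := mu (fun _ => False)) in *.
  assert (Hs : forall n, sum_f_R0 (fun _ : nat => c) n = INR (S n) * c).
  { induction n. simpl. lra. rewrite tech5, IHn. rewrite (S_INR (S n)). lra. }
  destruct (Req_dec c 0) as [|Hc0]; auto.
  destruct (Hc (Rabs c / 2)) as [N HN]. { apply Rabs_pos_lt in Hc0. lra. }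
  pose proof (HN N (le_n _)) as H1. pose proof (HN (S N) (le_S _ _ (le_n _))) as H2.
  unfold Rdist in *. rewrite Hs in H1, H2. rewrite (S_INR (S N)) in H2.
  assert (Rabs c <= Rabs (INR (S N) * c - c) + Rabs ((INR (S N) + 1) * c - c)).
  { replace c with (-(INR (S N) * c - c) + ((INR (S N) + 1) * c - c)) at 1 by ring.
    eapply Rle_trans. apply Rabs_triang. rewrite Rabs_Ropp. lra. }
  lra.
Qed.

Lemma mu_finite (A : nat -> set X) u :
  (forall n, M (A n)) -> (forall i j x, (i < u)%nat -> (j < u)%nat -> i <> j -> A i x -> A j x -> False) ->
  mu (fun x => exists n, (n < u)%nat /\ A n x) = sum_f_R0 (fun n => if lt_dec n u then mu (A n) else 0) (pred u)
  /\ (forall n, (n >= pred u)%nat -> sum_f_R0 (fun n => if lt_dec n u then mu (A n) else 0) n = sum_f_R0 (fun n => if lt_dec n u then mu (A n) else 0) (pred u)).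
Proof.
  intros HA Hd.
  assert (Hev : forall n, (n >= pred u)%nat -> sum_f_R0 (fun n => if lt_dec n u then mu (A n) else 0) n = sum_f_R0 (fun n => if lt_dec n u then mu (A n) else 0) (pred u)).
  { intros n Hn. induction Hn. auto. rewrite tech5, IHHn. destruct (lt_dec (S m) u). lia. lra. }
  split; auto.
  destruct Hmu as [_ [_ Hc]].
  specialize (Hc (fun n x => (n < u)%nat /\ A n x)).
  assert (Hc' : infinite_sum (fun n => mu (fun x => (n < u)%nat /\ A n x)) (mu (fun x => exists n, (n < u)%nat /\ A n x))).
  { apply Hc. intro n; apply M_and; auto. apply M_const. intros i j x Hij [? H1] [? H2]; eauto. }
  apply (uniqueness_sum (fun n => mu (fun x => (n < u)%nat /\ A n x))); auto.
  apply (isum_ev _ (pred u)). intros n Hn.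
  rewrite <- (Hev n Hn). apply sum_eq. intros i _. destruct (lt_dec i u).
  - apply mu_ext. intro; tauto.
  - rewrite <- mu_empty. apply mu_ext. intro; tauto.
Qed.

Lemma mu_union2 A B : M A -> M B -> (forall x, A x -> B x -> False) -> mu (fun x => A x \/ B x) = mu A + mu B.
Proof.
  intros HA HB Hd.
  destruct (mu_finite (fun n => match n with O => A | _ => B end) 2) as [H _].
  - intros [|n]; auto.
  - intros [|[|i]] [|[|j]] x Hi Hj Hij; simpl; try (exfalso; lia); intros; eauto.
  - simpl in H. rewrite <- H. apply mu_ext. intro x. split.
    + intros [Hx|Hx]; [exists O|exists 1%nat]; split; auto.
    + intros [[|[|n]] [Hn Hx]]; auto; lia.
Qed.

Lemma mu_mono A B : M A -> M B -> (forall x, A x -> B x) -> mu A <= mu B.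
Proof.
  intros HA HB H.
  assert (HC : M (fun x => B x /\ ~ A x)) by (apply M_and; auto; apply M_not; auto).
  rewrite (mu_ext B (fun x => A x \/ (B x /\ ~ A x))).
  - rewrite mu_union2; auto. pose proof (mu_ge0 _ HC). lra.
    intros x ? [? ?]; auto.
  - intro x; split. intro; destruct (classic (A x)); auto. intros [|[]]; auto.
Qed.

Lemma mu_le1 A : M A -> mu A <= 1.
Proof. intro HA. destruct Hmu as [_ [H1 _]]. rewrite <- H1. apply mu_mono; auto. apply M_True. Qed.

Lemma mu_compl A : M A -> mu (fun x => ~ A x) = 1 - mu A.
Proof.
  intro HA. destruct Hmu as [_ [H1 _]].
  rewrite <- H1. rewrite (mu_ext (fun _ => True) (fun x => A x \/ ~ A x)) by (intro x; tauto).
  rewrite mu_union2; auto. ring. apply M_not; auto.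
Qed.

Lemma mu_subadd (A : nat -> set X) S : (forall n, M (A n)) ->
  (forall N, sum_f_R0 (fun n => mu (A n)) N <= S) -> mu (fun x => exists n, A n x) <= S.
Proof.
  intros HA HS.
  set (D := fun n x => A n x /\ ~ (exists i, (i < n)%nat /\ A i x)).
  assert (HD : forall n, M (D n)).
  { intro n. apply M_and; auto. apply M_not, M_ex. intro i. apply M_and; auto. apply M_const. }
  destruct Hmu as [_ [_ Hc]].
  specialize (Hc D HD).
  assert (Hdis : forall i j x, i <> j -> D i x -> D j x -> False).
  { intros i j x Hij [Hi Ni] [Hj Nj]. destruct (Nat.lt_ge_cases i j).
    apply Nj; eauto. apply Ni. exists j. split; auto. lia. }
  specialize (Hc Hdis).
  rewrite (mu_ext (fun x => exists n, A n x) (fun x => exists n, D n x)).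
  - apply (isum_le _ _ _ Hc). intro N. eapply Rle_trans; [|apply (HS N)].
    apply sum_Rle. intros n _. apply mu_mono; auto. intros x [? ?]; auto.
  - intro x; split.
    + intros Hx. 
      assert (Hl : exists n, A n x /\ forall i, (i < n)%nat -> ~ A i x).
      { destruct Hx as [n Hn]. induction n as [n IH] using (well_founded_induction lt_wf).
        destruct (classic (exists i, (i < n)%nat /\ A i x)) as [[i [Hi1 Hi2]]|Hno].
        - apply (IH i Hi1 Hi2).
        - exists n. split; auto. intros i Hi Hai. apply Hno; eauto. }
      destruct Hl as [n [Hn Hm]]. exists n. split; auto. intros [i [Hi Hai]]. eapply Hm; eauto.
    + intros [n [Hn _]]; eauto.
Qed.

Lemma null_union (A : nat -> set X) : (forall n, M (A n)) -> (forall n, mu (A n) = 0) ->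
  mu (fun x => exists n, A n x) = 0.
Proof.
  intros HA H0. apply Rle_antisym.
  - apply mu_subadd; auto. intro N. rewrite (sum_eq _ (fun _ => 0)) by (intros; auto).
    induction N; simpl; lra.
  - apply mu_ge0, M_ex; auto.
Qed.


Lemma iter_S (f : X -> X) k x : Nat.iter (S k) f x = f (Nat.iter k f x).
Proof. reflexivity. Qed.
Lemma iter_shift (f : X -> X) k x : Nat.iter k f (f x) = f (Nat.iter k f x).
Proof. induction k; simpl; congruence. Qed.
Lemma iter_add (f : X -> X) a b x : Nat.iter (a + b) f x = Nat.iter a f (Nat.iter b f x).
Proof. induction a; simpl; congruence. Qed.
Lemma iter_inv (f g : X -> X) : (forall x, g (f x) = x) -> forall k x, Nat.iter k g (Nat.iter k f x) = x.
Proof. intros H k. induction k; intros x; simpl; auto. rewrite <- iter_shift, H. auto. Qed.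

Lemma M_pre (f : X -> X) : measurable_map M f -> forall k A, M A -> M (fun x => A (Nat.iter k f x)).
Proof.
  intros Hf k. induction k; intros A HA; simpl; auto.
  apply (IHk (fun y => A (f y))). apply Hf; auto.
Qed.

Lemma mu_pre (f : X -> X) : measurable_map M f -> measure_preserving M mu f ->
  forall k A, M A -> mu (fun x => A (Nat.iter k f x)) = mu A.
Proof.
  intros Hf Hp k. induction k; intros A HA; simpl; auto.
  rewrite (IHk (fun y => A (f y))). apply Hp; auto. apply Hf; auto.
Qed.

Lemma ae_impl (P Q : X -> Prop) : ae M mu P -> (forall x, P x -> Q x) -> ae M mu Q.
Proof. intros [N [HN [H0 HP]]] H. exists N; repeat split; auto. Qed.

Lemma ae_all (P : nat -> X -> Prop) : (forall k, ae M mu (P k)) -> ae M mu (fun x => forall k, P k x).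
Proof.
  intros H.
  set (Nk := fun k => proj1_sig (constructive_indefinite_description _ (H k))).
  assert (HN : forall k, M (Nk k) /\ mu (Nk k) = 0 /\ forall x, ~ Nk k x -> P k x).
  { intro k. unfold Nk. destruct (constructive_indefinite_description _ (H k)); simpl; auto. }
  exists (fun x => exists k, Nk k x). split; [|split].
  - apply M_ex; auto. intro k; apply HN.
  - apply null_union; auto; intro k; apply HN.
  - intros x Hx k. apply HN. intro; apply Hx; eauto.
Qed.

Lemma ae_and (P Q : X -> Prop) : ae M mu P -> ae M mu Q -> ae M mu (fun x => P x /\ Q x).
Proof.
  intros HP HQ. apply (ae_impl (fun x => forall k : nat, match k with O => P x | _ => Q x end)).
  apply ae_all. intros [|k]; auto. intros x H. split; [apply (H O)|apply (H 1%nat)].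
Qed.

Lemma recur (S : X -> X) : measurable_map M S -> measure_preserving M mu S -> ergodic M mu S ->
  forall A, M A -> 0 < mu A -> ae M mu (fun x => forall N, exists t, (t >= N)%nat /\ A (Nat.iter t S x)).
Proof.
  intros Sm Sp Se A HA Hpos.
  set (U := fun N x => exists t, (t >= N)%nat /\ A (Nat.iter t S x)).
  assert (HU : forall N, M (U N)).
  { intro N. apply M_ex; auto. intro t. apply M_and; auto. apply M_const. apply M_pre; auto. }
  assert (HUS : forall N x, U (Datatypes.S N) x <-> U N (S x)).
  { intros N x; unfold U; split.
    - intros [t [Ht Ha]]. destruct t as [|t]; [lia|]. exists t. split; [lia|]. rewrite iter_shift; auto.
    - intros [t [Ht Ha]]. exists (Datatypes.S t). split; [lia|]. rewrite iter_shift in Ha; auto. }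
  assert (Hmono : forall N x, U (Datatypes.S N) x -> U N x).
  { intros N x [t [Ht Ha]]. exists t; split; auto; lia. }
  assert (HmuU : forall N, mu (U N) = mu (U O)).
  { induction N; auto. rewrite <- IHN. rewrite (mu_ext (U (Datatypes.S N)) (fun x => U N (S x))) by apply HUS.
    apply Sp; auto. }
  set (F := fun x => forall N, U N x).
  assert (HF : M F) by (apply M_all; auto).
  assert (Hdiff : mu (fun x => U O x /\ ~ F x) = 0).
  { rewrite (mu_ext _ (fun x => exists N, U N x /\ ~ U (Datatypes.S N) x)).
    - apply null_union; auto.
      + intro N. apply M_and; auto. apply M_not; auto.
      + intro N. pose proof (mu_union2 (U (Datatypes.S N)) (fun x => U N x /\ ~ U (Datatypes.S N) x) (HU _)
          ltac:(apply M_and; auto; apply M_not; auto) ltac:(intros x ? [? ?]; auto)) as E. cbv beta in E.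
        rewrite (mu_ext (fun x => U (Datatypes.S N) x \/ (U N x /\ ~ U (Datatypes.S N) x)) (U N)) in E.
        * rewrite HmuU, (HmuU (Datatypes.S N)) in E. lra.
        * intro x; split. intros [H|[H _]]; auto. intro H. destruct (classic (U (Datatypes.S N) x)); auto.
    - intro x; split.
      + intros [H0 HnF]. apply not_all_ex_not in HnF. destruct HnF as [N HN].
        induction N. contradiction. destruct (classic (U N x)) as [HUN|HUN]; eauto.
      + intros [N [H1 H2]]. split. 
        * clear H2. induction N; auto.
        * intro HFx. apply H2, HFx. }
  assert (HmuF : mu F = mu (U O)).
  { pose proof (mu_union2 F (fun x => U O x /\ ~ F x) HF ltac:(apply M_and; auto; apply M_not; auto)
      ltac:(intros x ? [? ?]; auto)) as E. cbv beta in E.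
    rewrite (mu_ext (fun x => F x \/ (U O x /\ ~ F x)) (U O)) in E. lra.
    intro x; split. intros [H|[H _]]; [apply H|auto]. intro H. destruct (classic (F x)); auto. }
  assert (HA0 : mu A <= mu (U O)).
  { apply mu_mono; auto. intros x Hx. exists O. split; auto. }
  assert (Hinv : forall x, F (S x) <-> F x).
  { intro x; split.
    - intros H N. apply Hmono, HUS, H.
    - intros H N. apply HUS, H. }
  destruct (Se F HF Hinv) as [H0|H1]. lra.
  exists (fun x => ~ F x). split; [apply M_not; auto|split].
  - rewrite mu_compl; auto. lra.
  - intros x Hx. apply NNPP in Hx. apply Hx.
Qed.

Lemma least_ex (Q : nat -> Prop) : (exists p, Q p) -> exists p, Q p /\ forall q, (q < p)%nat -> ~ Q q.
Proof.
  intros [n Hn]. induction n as [n IH] using (well_founded_induction lt_wf).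
  destruct (classic (exists i, (i < n)%nat /\ Q i)) as [[i [Hi1 Hi2]]|Hno].
  - apply (IH i Hi1 Hi2).
  - exists n. split; auto. intros i Hi Hai. apply Hno; eauto.
Qed.

Definition NM (h : X -> nat) := forall v, M (fun x => h x = v).

Lemma NM_const c : NM (fun _ => c). Proof. intro v. apply M_const. Qed.

Lemma NM_pre (f : X -> X) h k : measurable_map M f -> NM h -> NM (fun x => h (Nat.iter k f x)).
Proof. intros Hf Hh v. apply (M_pre f Hf k (fun y => h y = v)), Hh. Qed.

Lemma NM_add h1 h2 : NM h1 -> NM h2 -> NM (fun x => (h1 x + h2 x)%nat).
Proof.
  intros H1 H2 v. apply (M_ext (fun x => exists a, (a <= v)%nat /\ h1 x = a /\ h2 x = (v - a)%nat)).
  - apply M_ex. intro a. apply M_and. apply M_const. apply M_and; auto.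
  - intro x; split. intros [a [Ha [E1 E2]]]; lia. intro E. exists (h1 x). lia.
Qed.

Lemma NM_mul h1 h2 : NM h1 -> NM h2 -> NM (fun x => (h1 x * h2 x)%nat).
Proof.
  intros H1 H2 v. apply (M_ext (fun x => exists a, h1 x = a /\ exists b, h2 x = b /\ (a * b = v)%nat)).
  - apply M_ex. intro a. apply M_and; auto. apply M_ex. intro b. apply M_and; auto. apply M_const.
  - intro x; split. intros [a [E1 [b [E2 E3]]]]; subst; auto. intro E. exists (h1 x); split; auto. exists (h2 x); auto.
Qed.

Lemma NM_case (g : X -> nat) (h : nat -> X -> nat) : NM g -> (forall j, NM (h j)) -> NM (fun x => h (g x) x).
Proof.
  intros Hg Hh v. apply (M_ext (fun x => exists j, g x = j /\ h j x = v)).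
  - apply M_ex. intro j. apply M_and; [apply Hg|apply Hh].
  - intro x; split. intros [j [E1 E2]]; subst; auto. intro E. eauto.
Qed.

Definition ind (P : Prop) : nat := if excluded_middle_informative P then 1%nat else 0%nat.

Lemma NM_ind A : M A -> NM (fun x => ind (A x)).
Proof.
  intros HA v. apply (M_ext (fun x => (A x /\ v = 1%nat) \/ (~ A x /\ v = 0%nat))).
  - apply M_or; apply M_and; auto using M_const, M_not.
  - intro x; unfold ind; destruct (excluded_middle_informative (A x)); split; intuition.
Qed.

Fixpoint sumn (g : nat -> nat) (n : nat) : nat :=
  match n with O => O | S k => (sumn g k + g k)%nat end.

Lemma NM_sumn (g : nat -> X -> nat) n : (forall i, NM (g i)) -> NM (fun x => sumn (fun i => g i x) n).
Proof. intros H. induction n; simpl. apply NM_const. apply NM_add; auto. Qed.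

Lemma sumn_ext g1 g2 n : (forall i, (i < n)%nat -> g1 i = g2 i) -> sumn g1 n = sumn g2 n.
Proof. induction n; simpl; intros; auto. rewrite IHn, H; auto. Qed.

Lemma sumn_shift g n : sumn g (S n) = (g O + sumn (fun i => g (S i)) n)%nat.
Proof. induction n. simpl. lia. change (sumn g (S (S n))) with (sumn g (S n) + g (S n))%nat. rewrite IHn. simpl. lia. Qed.

Lemma sumn_rev g n : sumn g n = sumn (fun i => g (n - 1 - i)%nat) n.
Proof.
  induction n; auto. rewrite (sumn_shift (fun i => g (S n - 1 - i)%nat)). simpl sumn at 1.
  rewrite IHn. replace (S n - 1 - 0)%nat with n by lia. rewrite Nat.add_comm. f_equal.
  apply sumn_ext. intros i Hi. f_equal. lia.
Qed.

Lemma sumn_app g a b : sumn g (a + b) = (sumn g a + sumn (fun i => g (a + i)%nat) b)%nat.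
Proof. induction b. simpl. rewrite Nat.add_0_r. lia. rewrite Nat.add_succ_r. simpl. rewrite IHb. lia. Qed.

Lemma sumn_ge_term g n i : (i < n)%nat -> (g i <= sumn g n)%nat.
Proof. induction n; simpl; intros. lia. destruct (Nat.eq_dec i n). subst; lia. specialize (IHn ltac:(lia)). lia. Qed.

Lemma sumn_mono g n n' : (n <= n')%nat -> (sumn g n <= sumn g n')%nat.
Proof. induction 1; simpl; lia. Qed.

Lemma sumn_le g1 g2 n : (forall i, (g1 i <= g2 i)%nat) -> (sumn g1 n <= sumn g2 n)%nat.
Proof. intros H; induction n; simpl; auto. specialize (H n). lia. Qed.

Definition firstit (f : X -> X) (E : set X) (y : X) : nat :=
  match excluded_middle_informative (exists p, E (Nat.iter p f y)) with
  | left H => proj1_sig (constructive_indefinite_description _ (least_ex _ H))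
  | right _ => O end.

Lemma firstit_spec f E y : (exists p, E (Nat.iter p f y)) ->
  E (Nat.iter (firstit f E y) f y) /\ forall q, (q < firstit f E y)%nat -> ~ E (Nat.iter q f y).
Proof.
  intro H. unfold firstit. destruct (excluded_middle_informative _) as [H'|H']; [|contradiction].
  destruct (constructive_indefinite_description _ _) as [p Hp]. simpl. auto.
Qed.

Lemma firstit_eq f E y p : E (Nat.iter p f y) -> (forall q, (q < p)%nat -> ~ E (Nat.iter q f y)) ->
  firstit f E y = p.
Proof.
  intros H1 H2. destruct (firstit_spec f E y ltac:(eauto)) as [H3 H4].
  destruct (Nat.lt_trichotomy (firstit f E y) p) as [Hl|[Hl|Hl]]; auto.
  - exfalso; eapply H2; eauto.
  - exfalso; eapply H4; eauto.
Qed.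

Lemma firstit_none f E y : ~ (exists p, E (Nat.iter p f y)) -> firstit f E y = O.
Proof. intro H. unfold firstit. destruct (excluded_middle_informative _); [contradiction|auto]. Qed.

Lemma NM_firstit f E : measurable_map M f -> M E -> NM (firstit f E).
Proof.
  intros Hf HE v. apply (M_ext (fun y => (E (Nat.iter v f y) /\ forall q, q < v -> ~ E (Nat.iter q f y))%nat
     \/ (v = O /\ forall p, ~ E (Nat.iter p f y)))).
  - apply M_or. apply M_and. apply M_pre; auto. apply M_all. intro q. apply M_impl. apply M_const.
    apply M_not, M_pre; auto.
    apply M_and. apply M_const. apply M_all; intro p; apply M_not, M_pre; auto.
  - intro y; split.
    + intros [[H1 H2]|[H1 H2]].
      * apply firstit_eq; auto.
      * subst. apply firstit_none. intros [p Hp]. eapply H2; eauto.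
    + intro Hv. destruct (classic (exists p, E (Nat.iter p f y))) as [Hx|Hx].
      * left. subst. apply firstit_spec; auto.
      * right. subst. split. apply firstit_none; auto. intros p Hp; apply Hx; eauto.
Qed.

Lemma split_half A : non_atomic M mu -> M A -> 0 < mu A ->
  exists B, M B /\ (forall x, B x -> A x) /\ 0 < mu B /\ mu B <= mu A / 2.
Proof.
  intros Hna HA Hp. destruct (Hna A HA Hp) as [B [HB [HBA [H1 H2]]]].
  destruct (Rle_dec (mu B) (mu A / 2)) as [Hl|Hl].
  - exists B; auto.
  - exists (fun x => A x /\ ~ B x).
    assert (HC : M (fun x => A x /\ ~ B x)) by (apply M_and; auto; apply M_not; auto).
    pose proof (mu_union2 B (fun x => A x /\ ~ B x) HB HC ltac:(intros x ? [? ?]; auto)) as E.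
    cbv beta in E. rewrite (mu_ext _ A) in E.
    + repeat split; auto. intros x [? ?]; auto. lra. lra.
    + intro x; split. intros [H|[H _]]; auto. intro H. destruct (classic (B x)); auto.
Qed.

Lemma split_pow A k : non_atomic M mu -> M A -> 0 < mu A ->
  exists B, M B /\ (forall x, B x -> A x) /\ 0 < mu B /\ mu B <= mu A / 2 ^ (S k).
Proof.
  intros Hna HA Hp. induction k.
  - simpl. replace (2 * 1) with 2 by ring. apply split_half; auto.
  - destruct IHk as [B [HB [HBA [H1 H2]]]].
    destruct (split_half B Hna HB H1) as [C [HC [HCB [H3 H4]]]].
    exists C. repeat split; auto. 
    replace (mu A / 2 ^ S (S k)) with (mu A / 2 ^ S k / 2). lra.
    change (2 ^ S (S k)) with (2 * 2 ^ S k). field. apply pow_nonzero. lra.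
Qed.
Section Build.
Hypothesis Hna : non_atomic M mu.

Definition ch (k : nat) (A : set X) : set X :=
  match excluded_middle_informative (M A /\ 0 < mu A) with
  | left H => proj1_sig (constructive_indefinite_description _ (split_pow A (S k) Hna (proj1 H) (proj2 H)))
  | right _ => fun _ => False end.

Lemma ch_spec k A : M A -> 0 < mu A ->
  M (ch k A) /\ (forall x, ch k A x -> A x) /\ 0 < mu (ch k A) /\ mu (ch k A) <= mu A / 2 ^ S (S k).
Proof.
  intros HA Hp. unfold ch. destruct (excluded_middle_informative _) as [Hh|Hh]; [|tauto].
  destruct (constructive_indefinite_description _ _) as [B HB]. simpl. auto.
Qed.

Variable F0 : set X.
Fixpoint Aseq (k : nat) : set X :=
  match k with O => F0 | S k => fun x => Aseq k x /\ ~ ch k (Aseq k) x end.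

Lemma Aseq_inv : M F0 -> 0 < mu F0 -> forall k, M (Aseq k) /\ 0 < mu (Aseq k).
Proof.
  intros HF HF0 k. induction k; simpl; auto. destruct IHk as [HA Hp].
  destruct (ch_spec k _ HA Hp) as [Hc [Hcs [Hc0 Hc1]]].
  assert (HD : M (fun x => Aseq k x /\ ~ ch k (Aseq k) x)) by (apply M_and; auto; apply M_not; auto).
  split; auto.
  pose proof (mu_union2 _ _ Hc HD ltac:(intros x ? [? ?]; auto)) as E. cbv beta in E.
  rewrite (mu_ext _ (Aseq k)) in E.
  - assert (mu (Aseq k) / 2 ^ S (S k) <= mu (Aseq k) / 2).
    { unfold Rdiv. apply Rmult_le_compat_l. lra. apply Rinv_le_contravar. lra.
      change (2 ^ S (S k)) with (2 * (2 * 2 ^ k)). assert (1 <= 2 ^ k) by (apply pow_R1_Rle; lra). lra. }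
    lra.
  - intro x; split. intros [H|[H _]]; auto. intro H. destruct (classic (ch k (Aseq k) x)); auto.
Qed.

Lemma Aseq_mono i j x : (i <= j)%nat -> Aseq j x -> Aseq i x.
Proof. induction 1; auto. intros [H0 _]; auto. Qed.
End Build.

Lemma build_EZ : non_atomic M mu -> exists (E : nat -> set X) (Z : set X),
  (forall k, M (E k)) /\ (forall k, 0 < mu (E k)) /\ (forall k, mu (E k) <= (1/2) ^ (S k)) /\
  (forall i j x, i <> j -> E i x -> E j x -> False) /\ M Z /\ 0 < mu Z /\ (forall k x, E k x -> Z x -> False).
Proof.
  intro Hna. destruct Hmu as [_ [H1 _]].
  destruct (Hna (fun _ => True) M_True ltac:(lra)) as [F [HF [_ [HF0 HF1]]]].
  pose proof (Aseq_inv Hna F HF HF0) as Hinv.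
  exists (fun k => ch Hna k (Aseq Hna F k)), (fun x => ~ F x).
  assert (Hsp : forall k, M (ch Hna k (Aseq Hna F k)) /\ (forall x, ch Hna k (Aseq Hna F k) x -> Aseq Hna F k x) /\
     0 < mu (ch Hna k (Aseq Hna F k)) /\ mu (ch Hna k (Aseq Hna F k)) <= mu (Aseq Hna F k) / 2 ^ S (S k)).
  { intro k. apply ch_spec; apply Hinv. }
  assert (HAF : forall k x, Aseq Hna F k x -> F x).
  { intros k x H. apply (Aseq_mono Hna F 0 k); auto. lia. }
  repeat split.
  - intro k; apply Hsp.
  - intro k; apply Hsp.
  - intro k. destruct (Hsp k) as [Hm [_ [_ Hle]]]. pose proof (mu_le1 _ (proj1 (Hinv k))).
    assert (0 < 2 ^ S (S k)) by (apply pow_lt; lra).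
    eapply Rle_trans; [apply Hle|].
    replace ((1/2) ^ S k) with (2 / 2 ^ S (S k)).
    + unfold Rdiv. apply Rmult_le_compat_r. left; apply Rinv_0_lt_compat; auto. lra.
    + rewrite Rdiv_1_l, pow_inv. change (2 ^ S (S k)) with (2 * 2 ^ S k). field. apply pow_nonzero; lra.
  - intros i j x Hij Hi Hj.
    assert (forall a b, (a < b)%nat -> ch Hna a (Aseq Hna F a) x -> ch Hna b (Aseq Hna F b) x -> False).
    { intros a b Hab Ha Hb. apply (proj1 (proj2 (Hsp b))) in Hb.
      apply (Aseq_mono Hna F (S a) b) in Hb; [|lia]. destruct Hb as [_ Hb]. auto. }
    destruct (Nat.lt_trichotomy i j) as [|[|]]; eauto.
  - apply M_not; auto.
  - rewrite mu_compl; auto. lra.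
  - intros k x Hk Hz. apply Hz. apply (HAF k). apply (proj1 (proj2 (Hsp k))); auto.
Qed.
Variables (T Tinv : X -> X).
Hypothesis HT : invertible_with M T Tinv.
Hypothesis Hmp : measure_preserving M mu T.
Hypothesis Herg : ergodic M mu T.

Lemma TTinv x : T (Tinv x) = x. Proof. apply HT. Qed.
Lemma TinvT x : Tinv (T x) = x. Proof. apply HT. Qed.
Lemma Tm : measurable_map M T. Proof. apply HT. Qed.
Lemma Tinvm : measurable_map M Tinv. Proof. apply HT. Qed.
Lemma Tinvp : measure_preserving M mu Tinv.
Proof.
  intros A HA. set (B := fun x => A (Tinv x)). assert (HB : M B) by (apply Tinvm; auto).
  rewrite <- (Hmp B HB). apply mu_ext. intro x; unfold B; rewrite TinvT; tauto.
Qed.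
Lemma Tinve : ergodic M mu Tinv.
Proof.
  intros A HA Hinv. apply Herg; auto. intro x. rewrite <- (Hinv (T x)), TinvT. tauto.
Qed.

Lemma iter_TinvT t s x : (s <= t)%nat -> Nat.iter t Tinv (Nat.iter s T x) = Nat.iter (t - s) Tinv x.
Proof.
  intro H. replace (Nat.iter t Tinv (Nat.iter s T x)) with (Nat.iter ((t-s)+s) Tinv (Nat.iter s T x)) by (f_equal; lia).
  rewrite iter_add. f_equal. apply iter_inv. apply TinvT.
Qed.
Lemma iter_TinvT' t s x : (t <= s)%nat -> Nat.iter t Tinv (Nat.iter s T x) = Nat.iter (s - t) T x.
Proof.
  intro H. replace (Nat.iter t Tinv (Nat.iter s T x)) with (Nat.iter t Tinv (Nat.iter (t + (s - t)) T x)) by (f_equal; f_equal; lia).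
  rewrite iter_add. apply iter_inv. apply TinvT.
Qed.
Lemma iter_TTinv t s x : (s <= t)%nat -> Nat.iter t T (Nat.iter s Tinv x) = Nat.iter (t - s) T x.
Proof.
  intro H. replace (Nat.iter t T (Nat.iter s Tinv x)) with (Nat.iter ((t-s)+s) T (Nat.iter s Tinv x)) by (f_equal; lia).
  rewrite iter_add. f_equal. apply iter_inv. apply TTinv.
Qed.

Variables (E : nat -> set X) (Z : set X).
Hypothesis HE : forall k, M (E k).
Hypothesis HEpos : forall k, 0 < mu (E k).
Hypothesis HEsmall : forall k, mu (E k) <= (1/2) ^ (S k).
Hypothesis HEdis : forall i j x, i <> j -> E i x -> E j x -> False.
Hypothesis HZ : M Z.
Hypothesis HZpos : 0 < mu Z.
Hypothesis HZE : forall k x, E k x -> Z x -> False.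

Definition u (k : nat) : nat := (2 ^ (S k))%nat.
Definition c (k : nat) : nat := (S k * u k)%nat.
Definition rho (k : nat) : X -> nat := firstit Tinv (E k).
Definition Bk (k : nat) (x : X) : Prop := E k x \/ ((u k <= rho k x)%nat /\ rho k x mod u k = O).
Definition Gd (K : nat) (x : X) : Prop := forall k, (k >= K)%nat -> ~ Bk k x.
Definition Gd' (x : X) : Prop := exists K, Gd K x.
Definition Sk (K : nat) (x : X) : nat := sumn (fun k => c k * ind (Bk k x))%nat K.
Definition Hc (x : X) : nat :=
  match excluded_middle_informative (Gd' x) with
  | left H => proj1_sig (constructive_indefinite_description _ H)
  | right _ => O end.
Definition P (x : X) : nat := Sk (Hc x) x.
Definition C (j : nat) (y : X) : Prop := exists i, (i >= j)%nat /\ E i y.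
Definition rhoC (j : nat) : X -> nat := firstit Tinv (C j).
Definition m (y : X) : nat :=
  match excluded_middle_informative (exists j, E j (T y)) with
  | left H => rhoC (proj1_sig (constructive_indefinite_description _ H)) y
  | right _ => O end.
Definition Q (j : nat) (y : X) : nat := (sumn (fun i => P (Nat.iter (S i) Tinv y)) j + j * j)%nat.
Definition G (y : X) : nat := Q (m y) y.
Definition fF (x : X) : R := INR (P x) + INR (G x) - INR (G (T x)).

Lemma u_pos k : (1 <= u k)%nat.
Proof. unfold u. pose proof (Nat.pow_le_mono_r 2 0 (S k)). simpl in *. lia. Qed.

Lemma M_Bk k : M (Bk k).
Proof.
  unfold Bk. apply M_or; auto. apply (M_ext (fun x => exists v, rho k x = v /\ (u k <= v /\ v mod u k = O)%nat)).
  - apply M_ex; intro v. apply M_and. apply NM_firstit; auto. apply Tinvm. apply M_const.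
  - intro x; split. intros [v [<- H]]; auto. intro H; eauto.
Qed.

Lemma M_Gd K : M (Gd K).
Proof. apply M_all. intro k. apply M_impl. apply M_const. apply M_not, M_Bk. Qed.

Lemma NM_Sk K : NM (Sk K).
Proof. unfold Sk. apply (NM_sumn (fun k x => c k * ind (Bk k x))%nat). intro k. apply NM_mul. apply NM_const. apply NM_ind, M_Bk. Qed.

Lemma Sk_stable K K' x : Gd K x -> (K <= K')%nat -> Sk K' x = Sk K x.
Proof.
  intros HG HK. induction HK; auto. unfold Sk in *. simpl. rewrite IHHK.
  unfold ind. destruct (excluded_middle_informative _) as [Hb|]; [|lia]. exfalso. apply (HG m0); auto.
Qed.

Lemma P_eq K x : Gd K x -> P x = Sk K x.
Proof.
  intro HG. unfold P, Hc. destruct (excluded_middle_informative _) as [H|H]; [|exfalso; apply H; exists K; auto].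
  destruct (constructive_indefinite_description _ _) as [K' HK']. simpl.
  destruct (Nat.le_ge_cases K K') as [Hk|Hk]; [apply Sk_stable; auto | symmetry; apply Sk_stable; auto].
Qed.

Lemma NM_P : NM P.
Proof.
  intro v. apply (M_ext (fun x => (exists K, Gd K x /\ Sk K x = v) \/ (~ (exists K, Gd K x) /\ Sk O x = v))).
  - apply M_or. apply M_ex; intro K; apply M_and. apply M_Gd. apply NM_Sk.
    apply M_and. apply M_not, M_ex, M_Gd. apply NM_Sk.
  - intro x; split.
    + intros [[K [H1 H2]]|[H1 H2]]. rewrite (P_eq K); auto.
      unfold P, Hc. destruct (excluded_middle_informative _) as [H|H]; [contradiction|auto].
    + intro Hv. destruct (classic (exists K, Gd K x)) as [[K HK]|HK].
      * left. exists K. rewrite <- (P_eq K); auto.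
      * right. split; auto. unfold P, Hc in Hv. destruct (excluded_middle_informative _) as [H|H]; [contradiction|auto].
Qed.

Lemma P_ge k x : Gd' x -> Bk k x -> (c k <= P x)%nat.
Proof.
  intros [K HK] Hb. rewrite (P_eq (Nat.max K (S k))). 2:{ intros k' Hk'. apply HK. lia. }
  unfold Sk. eapply Nat.le_trans; [|apply (sumn_ge_term _ _ k); lia]. simpl.
  unfold ind. destruct (excluded_middle_informative _); [lia|contradiction].
Qed.

Lemma M_C j : M (C j).
Proof. apply M_ex. intro i. apply M_and; auto. apply M_const. Qed.

Lemma m_spec j y : E j (T y) -> m y = rhoC j y.
Proof.
  intro Hj. unfold m. destruct (excluded_middle_informative _) as [H|H]; [|exfalso; apply H; eauto].
  destruct (constructive_indefinite_description _ _) as [j' Hj']. simpl.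
  destruct (Nat.eq_dec j' j); [subst; auto|]. exfalso; eapply HEdis; eauto.
Qed.

Lemma m_none y : (forall j, ~ E j (T y)) -> m y = O.
Proof.
  intro Hn. unfold m. destruct (excluded_middle_informative _) as [[j Hj]|H]; auto. exfalso; eapply Hn; eauto.
Qed.

Lemma NM_m : NM m.
Proof.
  intro v. apply (M_ext (fun y => (exists j, E j (T y) /\ rhoC j y = v) \/ ((forall j, ~ E j (T y)) /\ v = O))).
  - apply M_or. apply M_ex; intro j; apply M_and. apply Tm; auto. apply NM_firstit. apply Tinvm. apply M_C.
    apply M_and. apply M_all; intro j; apply M_not, Tm; auto. apply M_const.
  - intro y; split.
    + intros [[j [H1 H2]]|[H1 H2]]. rewrite (m_spec j); auto. subst; apply m_none; auto.
    + intro Hv. destruct (classic (exists j, E j (T y))) as [[j Hj]|Hn].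
      * left. exists j. rewrite <- (m_spec j); auto.
      * right. split. intros j Hj; eauto. rewrite <- Hv. apply m_none. intros j Hj; eauto.
Qed.

Lemma NM_G : NM G.
Proof.
  unfold G. apply (NM_case m Q NM_m). intro j. unfold Q. apply NM_add.
  apply (NM_sumn (fun i y => P (Nat.iter (S i) Tinv y))). intro i. apply NM_pre. apply Tinvm. apply NM_P.
  apply NM_const.
Qed.

Lemma fF_meas : measurable_fun M fF.
Proof.
  intro a. apply (M_ext (fun x => exists p, P x = p /\ exists g, G x = g /\ exists g', G (T x) = g' /\
     INR p + INR g - INR g' <= a)).
  - apply M_ex; intro p; apply M_and. apply NM_P. apply M_ex; intro g; apply M_and. apply NM_G.
    apply M_ex; intro g'; apply M_and. apply (NM_pre T G 1 Tm NM_G). apply M_const.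
  - intro x; unfold fF; split.
    + intros [p [<- [g [<- [g' [<- H]]]]]]; auto.
    + intro H. exists (P x); split; auto. exists (G x); split; auto. exists (G (T x)); auto.
Qed.
Definition pastv (k : nat) (y : X) : Prop := exists p, E k (Nat.iter p Tinv y).

Lemma rho_shift k y i : pastv k y -> (i <= rho k y)%nat -> rho k (Nat.iter i Tinv y) = (rho k y - i)%nat.
Proof.
  intros Hp Hi. destruct (firstit_spec Tinv (E k) y Hp) as [H1 H2]. unfold rho in *.
  apply firstit_eq.
  - rewrite <- iter_add. replace (firstit Tinv (E k) y - i + i)%nat with (firstit Tinv (E k) y) by lia. auto.
  - intros q Hq. rewrite <- iter_add. apply H2. lia.
Qed.

Lemma rho_pos_past k y : (1 <= rho k y)%nat -> pastv k y.
Proof. intro H. apply NNPP. intro Hn. unfold rho in H. rewrite (firstit_none _ _ _ Hn) in H. lia. Qed.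

Lemma mark k y : pastv k y -> exists i, (i < u k)%nat /\ Bk k (Nat.iter i Tinv y).
Proof.
  intros Hp. pose proof (u_pos k) as Hu. destruct (firstit_spec Tinv (E k) y Hp) as [H1 H2]. unfold rho in *.
  destruct (Nat.lt_ge_cases (rho k y) (u k)) as [Hl|Hl].
  - exists (rho k y). split; auto. left; auto.
  - exists (rho k y mod u k). split. apply Nat.mod_upper_bound; lia.
    pose proof (Nat.div_mod_eq (rho k y) (u k)) as Hd.
    pose proof (Nat.mod_upper_bound (rho k y) (u k) ltac:(lia)).
    right. rewrite rho_shift; auto; [|lia].
    replace (rho k y - rho k y mod u k)%nat with (rho k y / u k * u k)%nat by lia.
    split. 
    + assert (H3 : (1 <= rho k y / u k)%nat). { apply Nat.div_le_lower_bound; lia. } nia.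
    + apply Nat.Div0.mod_mul.
Qed.

Lemma arith1 p d w : p mod w = O -> (p - d) mod w = O -> (0 < d < w)%nat -> (d <= p)%nat -> False.
Proof.
  intros H1 H2 H3 H4. apply Nat.Div0.mod_divides in H1, H2. destruct H1 as [a Ha]. destruct H2 as [b Hb].
  assert (E1 : (w * a = w * b + d)%nat) by lia.
  destruct (Nat.le_gt_cases a b) as [Hab|Hab].
  - assert (w * a <= w * b)%nat by (apply Nat.mul_le_mono_l; auto). lia.
  - assert (w * (b + 1) <= w * a)%nat by (apply Nat.mul_le_mono_l; lia). rewrite Nat.mul_add_distr_l in *. lia.
Qed.

Definition Bp (k : nat) (x : X) : Prop := (u k <= rho k x)%nat /\ rho k x mod u k = O.

Lemma M_Bp k : M (Bp k).
Proof.
  apply (M_ext (fun x => exists v, rho k x = v /\ (u k <= v /\ v mod u k = O)%nat)).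
  - apply M_ex; intro v. apply M_and. apply NM_firstit; auto. apply Tinvm. apply M_const.
  - intro x; split. intros [v [<- H]]; auto. intro H; eauto.
Qed.

Lemma sum_const_if (w : nat) (a : R) : (1 <= w)%nat ->
  sum_f_R0 (fun n => if lt_dec n w then a else 0) (pred w) = INR w * a.
Proof.
  intro Hw. assert (H : forall n, (n < w)%nat -> sum_f_R0 (fun n => if lt_dec n w then a else 0) n = INR (S n) * a).
  { induction n; intro Hn. simpl. destruct (lt_dec 0 w); [lra|lia].
    rewrite tech5, IHn by lia. destruct (lt_dec (S n) w); [|lia]. rewrite (S_INR (S n)). lra. }
  rewrite H by lia. f_equal. f_equal. lia.
Qed.

Lemma mu_Bp k : mu (Bp k) <= (1/2) ^ (S k).
Proof.
  pose proof (u_pos k) as Hu.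
  set (A := fun i x => Bp k (Nat.iter i Tinv x)).
  assert (HA : forall i, M (A i)). { intro i. apply M_pre. apply Tinvm. apply M_Bp. }
  destruct (mu_finite A (u k) HA) as [Hf _].
  - intros i j x Hi Hj Hij Hxi Hxj. unfold A in *.
    assert (forall i j, (i < j < u k)%nat -> Bp k (Nat.iter i Tinv x) -> Bp k (Nat.iter j Tinv x) -> False).
    { clear i j Hi Hj Hij Hxi Hxj. intros i j Hij [Hz1 Hz2] [Hy1 Hy2].
      set (z := Nat.iter i Tinv x) in *.
      assert (Ey : Nat.iter j Tinv x = Nat.iter (j - i) Tinv z).
      { unfold z. rewrite <- iter_add. f_equal. lia. }
      rewrite Ey in Hy1, Hy2. rewrite rho_shift in Hy2; auto. 2: apply rho_pos_past; lia. 2: lia.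
      apply (arith1 (rho k z) (j - i) (u k)); auto; lia. }
    destruct (Nat.lt_trichotomy i j) as [|[|]]; [eauto|contradiction|eauto].
  - rewrite (sum_eq _ (fun n => if lt_dec n (u k) then mu (Bp k) else 0)) in Hf.
    2:{ intros i _. destruct (lt_dec i (u k)); auto. unfold A. apply (mu_pre Tinv Tinvm Tinvp). apply M_Bp. }
    rewrite sum_const_if in Hf by auto.
    assert (Hle : mu (fun x => exists n, (n < u k)%nat /\ A n x) <= 1).
    { apply mu_le1. apply M_ex. intro n. apply M_and. apply M_const. auto. }
    assert (Hui : INR (u k) = 2 ^ S k). { unfold u. rewrite pow_INR. replace (INR 2) with 2 by (simpl; lra). reflexivity. }
    rewrite Hf, Hui in Hle.
    replace ((1/2) ^ S k) with (/ 2 ^ S k). 2:{ rewrite <- pow_inv. f_equal. lra. }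
    assert (0 < 2 ^ S k) by (apply pow_lt; lra).
    apply (Rmult_le_reg_l (2 ^ S k)); auto. rewrite Rinv_r; lra.
Qed.

Lemma mu_or_le A B : M A -> M B -> mu (fun x => A x \/ B x) <= mu A + mu B.
Proof.
  intros HA HB.
  assert (HC : M (fun x => B x /\ ~ A x)) by (apply M_and; auto; apply M_not; auto).
  rewrite (mu_ext _ (fun x => A x \/ (B x /\ ~ A x))).
  - rewrite mu_union2; auto. pose proof (mu_mono _ _ HC HB ltac:(intros x [? ?]; auto)). lra.
    intros x ? [? ?]; auto.
  - intro x; split. intros [H|H]; auto. destruct (classic (A x)); auto. intros [H|[H _]]; auto.
Qed.

Lemma mu_Bk k : mu (Bk k) <= (1/2) ^ k.
Proof.
  unfold Bk. eapply Rle_trans. apply mu_or_le; auto. apply M_Bp.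
  pose proof (HEsmall k). pose proof (mu_Bp k). unfold Bp in *. simpl in *. lra.
Qed.

Lemma geom_le K N : sum_f_R0 (fun n => (1/2) ^ (K + n)) N <= 2 * (1/2) ^ K.
Proof.
  rewrite (sum_eq _ (fun n => (1/2)^n * (1/2)^K)) by (intros; rewrite pow_add; ring).
  rewrite <- scal_sum. rewrite tech3 by lra.
  assert (0 <= (1/2) ^ S N) by (apply pow_le; lra).
  assert (0 <= (1/2) ^ K) by (apply pow_le; lra).
  replace ((1 - (1 / 2) ^ S N) / (1 - 1 / 2)) with (2 * (1 - (1 / 2) ^ S N)) by field.
  nra.
Qed.

Lemma not_Gd'_null : mu (fun x => ~ Gd' x) = 0.
Proof.
  assert (HM' : M (fun x => ~ Gd' x)) by (apply M_not, M_ex, M_Gd).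
  assert (Hb : forall K, mu (fun x => ~ Gd' x) <= 2 * (1/2) ^ K).
  { intro K. eapply Rle_trans.
    - apply (mu_mono _ (fun x => exists n, Bk (K + n) x)); auto. apply M_ex; intro; apply M_Bk.
      intros x Hx. apply NNPP. intro Hn. apply Hx. exists K. intros k Hk Hb. apply Hn.
      exists (k - K)%nat. replace (K + (k - K))%nat with k by lia. auto.
    - apply mu_subadd. intro; apply M_Bk. intro N. eapply Rle_trans; [|apply (geom_le K N)].
      apply sum_Rle. intros n _. apply mu_Bk. }
  apply Rle_antisym; [|apply mu_ge0; auto].
  apply Rnot_lt_le. intro Hpos.
  destruct (pow_lt_1_zero (1/2) ltac:(rewrite Rabs_pos_eq; lra) (mu (fun x => ~ Gd' x) / 2) ltac:(lra)) as [N HN].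
  specialize (HN N (le_n _)). specialize (Hb N). rewrite Rabs_pos_eq in HN by (apply pow_le; lra). lra.
Qed.
Lemma nat_above K : exists k : nat, K <= INR k.
Proof. destruct (INR_archimed 1 K ltac:(lra)) as [n Hn]. exists n. lra. Qed.

Lemma lt_div a b c0 : 0 < b -> a * b < c0 -> a < c0 / b.
Proof. intros Hb H. apply (Rmult_lt_reg_r b); auto. unfold Rdiv. rewrite Rmult_assoc, Rinv_l; lra. Qed.
Lemma div_lt a b c0 : 0 < b -> c0 < a * b -> c0 / b < a.
Proof. intros Hb H. apply (Rmult_lt_reg_r b); auto. unfold Rdiv. rewrite Rmult_assoc, Rinv_l; lra. Qed.

Definition good (x : X) : Prop :=
  (forall k N, exists t, (t >= N)%nat /\ E k (Nat.iter t Tinv x)) /\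
  (forall k N, exists t, (t >= N)%nat /\ E k (Nat.iter t T x)) /\
  (forall N, exists t, (t >= N)%nat /\ Z (Nat.iter t T x)) /\
  (forall i, Gd' (Nat.iter i T x) /\ Gd' (Nat.iter i Tinv x)).

Lemma ae_good : ae M mu good.
Proof.
  apply ae_and; [|apply ae_and; [|apply ae_and]].
  - apply ae_all. intro k. apply recur; auto using Tinvm, Tinvp, Tinve.
  - apply ae_all. intro k. apply recur; auto using Tm.
  - apply recur; auto using Tm.
  - apply ae_all. intro i.
    exists (fun x => ~ Gd' (Nat.iter i T x) \/ ~ Gd' (Nat.iter i Tinv x)).
    assert (HG : M (fun x => ~ Gd' x)) by (apply M_not, M_ex, M_Gd).
    split; [|split].
    + apply M_or; [apply (M_pre T Tm i (fun x => ~ Gd' x)) | apply (M_pre Tinv Tinvm i (fun x => ~ Gd' x))]; auto.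
    + apply Rle_antisym.
      * eapply Rle_trans. apply mu_or_le; [apply (M_pre T Tm i (fun x => ~ Gd' x)) | apply (M_pre Tinv Tinvm i (fun x => ~ Gd' x))]; auto.
        rewrite (mu_pre T Tm Hmp i (fun x => ~ Gd' x) HG).
        rewrite (mu_pre Tinv Tinvm Tinvp i (fun x => ~ Gd' x) HG). rewrite not_Gd'_null. lra.
      * apply mu_ge0. apply M_or; [apply (M_pre T Tm i (fun x => ~ Gd' x)) | apply (M_pre Tinv Tinvm i (fun x => ~ Gd' x))]; auto.
    + intros x Hx. split; apply NNPP; intro; apply Hx; auto.
Qed.
Lemma birk_fwd n x : birk_sum T fF n x =
  INR (sumn (fun i => P (Nat.iter i T x)) n) + INR (G x) - INR (G (Nat.iter n T x)).
Proof.
  induction n. simpl. lra.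
  change (birk_sum T fF (S n) x) with (birk_sum T fF n x + fF (Nat.iter n T x)).
  rewrite IHn. unfold fF. simpl sumn. rewrite plus_INR. simpl. lra.
Qed.

Lemma birk_bwd n x : birk_sum Tinv fF (S n) x =
  INR (sumn (fun i => P (Nat.iter i Tinv x)) (S n)) + INR (G (Nat.iter n Tinv x)) - INR (G (T x)).
Proof.
  induction n. simpl. unfold fF. lra.
  change (birk_sum Tinv fF (S (S n)) x) with (birk_sum Tinv fF (S n) x + fF (Nat.iter (S n) Tinv x)).
  rewrite IHn. unfold fF. change (sumn (fun i => P (Nat.iter i Tinv x)) (S (S n))) with
    (sumn (fun i => P (Nat.iter i Tinv x)) (S n) + P (Nat.iter (S n) Tinv x))%nat.
  rewrite plus_INR. rewrite (iter_S Tinv n x), TTinv. lra.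
Qed.

Lemma LB k y : (forall N, exists t, (t >= N)%nat /\ E k (Nat.iter t Tinv y)) ->
  (forall i, Gd' (Nat.iter i Tinv y)) ->
  forall q, (q * c k <= sumn (fun i => P (Nat.iter i Tinv y)) (q * u k))%nat.
Proof.
  intros Hpast Hgd q. induction q. simpl. lia.
  replace (S q * u k)%nat with (q * u k + u k)%nat by lia. rewrite sumn_app.
  set (y' := Nat.iter (q * u k) Tinv y).
  assert (Hp : pastv k y').
  { destruct (Hpast (q * u k)%nat) as [t [Ht Et]]. exists (t - q * u k)%nat. unfold y'.
    rewrite <- iter_add. replace (t - q * u k + q * u k)%nat with t by lia. auto. }
  destruct (mark k y' Hp) as [i0 [Hi0 Hb]].
  assert (Heq : Nat.iter i0 Tinv y' = Nat.iter (q * u k + i0) Tinv y).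
  { unfold y'. rewrite <- iter_add. f_equal. lia. }
  rewrite Heq in Hb.
  pose proof (P_ge k _ (Hgd _) Hb).
  pose proof (sumn_ge_term (fun i => P (Nat.iter (q * u k + i) Tinv y)) (u k) i0 Hi0). simpl in *. lia.
Qed.

Lemma LBR k y : (forall N, exists t, (t >= N)%nat /\ E k (Nat.iter t Tinv y)) ->
  (forall i, Gd' (Nat.iter i Tinv y)) ->
  forall n, INR (S k) * (INR n - INR (u k)) <= INR (sumn (fun i => P (Nat.iter i Tinv y)) n).
Proof.
  intros H1 H2 n. pose proof (u_pos k) as Hu.
  pose proof (LB k y H1 H2 (n / u k)) as H.
  pose proof (sumn_mono (fun i => P (Nat.iter i Tinv y)) (n / u k * u k) n) as Hm.
  assert (Hd : (n / u k * u k <= n /\ n < n / u k * u k + u k)%nat).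
  { pose proof (Nat.div_mod_eq n (u k)). pose proof (Nat.mod_upper_bound n (u k) ltac:(lia)). lia. }
  specialize (Hm ltac:(lia)).
  assert (Hle : (n / u k * c k <= sumn (fun i => P (Nat.iter i Tinv y)) n)%nat) by lia.
  apply le_INR in Hle. unfold c in Hle. rewrite !mult_INR in Hle.
  assert (Hlt : INR n < INR (n / u k) * INR (u k) + INR (u k)).
  { rewrite <- mult_INR, <- plus_INR. apply lt_INR. lia. }
  pose proof (pos_INR (S k)). nra.
Qed.

Lemma LBF k x : good x -> forall n,
  INR (S k) * (INR n - INR (u k)) <= INR (sumn (fun i => P (Nat.iter i T x)) n).
Proof.
  intros [R1 [R2 [R3 R4]]] n. destruct n as [|n'].
  - change (sumn (fun i => P (Nat.iter i T x)) 0) with O. rewrite INR_0.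
    pose proof (pos_INR (u k)). pose proof (pos_INR (S k)). nra.
  - set (y := Nat.iter n' T x).
    rewrite sumn_rev. rewrite (sumn_ext _ (fun i => P (Nat.iter i Tinv y))).
    + apply LBR.
      * intro N. destruct (R1 k N) as [t [Ht Et]]. exists (t + n')%nat. split. lia.
        unfold y. rewrite iter_TinvT by lia. replace (t + n' - n')%nat with t by lia. auto.
      * intro i. unfold y. destruct (Nat.le_gt_cases i n').
        rewrite iter_TinvT' by lia. apply R4. rewrite iter_TinvT by lia. apply R4.
    + intros i Hi. unfold y. rewrite iter_TinvT' by lia. f_equal. f_equal. lia.
Qed.
Lemma C_mono j j' y : (j <= j')%nat -> C j' y -> C j y.
Proof. intros H [i [Hi Ei]]. exists i. split; auto. lia. Qed.

Lemma no_visit x B : exists k0, forall t, (1 <= t <= B)%nat -> ~ C k0 (Nat.iter t T x).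
Proof.
  induction B.
  - exists O. intros t Ht. lia.
  - destruct IHB as [k0 Hk0].
    destruct (classic (exists j, E j (Nat.iter (S B) T x))) as [[j Hj]|Hn].
    + exists (Nat.max k0 (S j)). intros t Ht Hc.
      destruct (Nat.eq_dec t (S B)) as [->|Hne].
      * destruct Hc as [i [Hi Ei]]. apply (HEdis i j (Nat.iter (S B) T x)); auto. lia.
      * apply (Hk0 t). lia. apply (C_mono k0 (Nat.max k0 (S j))); auto. lia.
    + exists k0. intros t Ht Hc.
      destruct (Nat.eq_dec t (S B)) as [->|Hne].
      * destruct Hc as [i [Hi Ei]]. apply Hn; eauto.
      * apply (Hk0 t); auto. lia.
Qed.

Lemma concl3 x : good x -> forall K : R, exists N : nat, forall n : nat,
  (N <= n)%nat -> (1 <= n)%nat -> K < avg Tinv fF n x.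
Proof.
  intros Hg K. destruct (nat_above K) as [k Hk].
  exists (S (S k * u k + G (T x))). intros n Hn H1.
  destruct n as [|n']; [lia|].
  unfold avg. rewrite birk_bwd.
  destruct Hg as [R1 [R2 [R3 R4]]].
  assert (Hgood : good x) by (repeat split; auto; apply R4).
  pose proof (LBR k x (R1 k) (fun i => proj2 (R4 i)) (S n')) as HL.
  apply le_INR in Hn. rewrite S_INR, plus_INR, mult_INR in Hn.
  pose proof (pos_INR (G (Nat.iter n' Tinv x))).
  pose proof (pos_INR (G (T x))). pose proof (pos_INR (u k)). pose proof (pos_INR k).
  rewrite S_INR in HL. rewrite S_INR in Hn.
  pose proof (pos_INR n'). apply lt_div. rewrite S_INR. lra.
  rewrite S_INR in *.
  assert (K * (INR n' + 1) <= INR k * (INR n' + 1)) by (apply Rmult_le_compat_r; lra). nra.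
Qed.

Lemma concl1 x : good x -> forall K : R, forall N : nat, exists n : nat,
  (N <= n)%nat /\ (1 <= n)%nat /\ K < avg T fF n x.
Proof.
  intros Hg K N. destruct (nat_above K) as [k Hk].
  pose proof (u_pos k).
  destruct Hg as [R1 [R2 [R3 R4]]].
  assert (Hgood : good x) by (repeat split; auto; apply R4).
  destruct (R3 (S (S (N + S k * u k)))) as [t [Ht Zt]].
  exists (pred t). split; [lia|split; [nia|]].
  unfold avg. rewrite birk_fwd.
  assert (HG0 : G (Nat.iter (pred t) T x) = O).
  { unfold G. rewrite m_none. reflexivity. intros j Ej. rewrite <- iter_S in Ej.
    replace (S (pred t)) with t in Ej by lia. eapply HZE; eauto. }
  rewrite HG0. pose proof (LBF k x Hgood (pred t)) as HL.
  assert (Ht' : (N + S k * u k + 1 <= pred t)%nat) by lia.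
  apply le_INR in Ht'. rewrite !plus_INR, mult_INR in Ht'.
  pose proof (pos_INR (G x)). pose proof (pos_INR (u k)). pose proof (pos_INR k). pose proof (pos_INR N).
  rewrite S_INR in *. simpl (INR 0). simpl (INR 1) in Ht'.
  assert (0 <= (INR k + 1) * INR (u k)) by (apply Rmult_le_pos; lra).
  apply lt_div. lra.
  assert (K * INR (pred t) <= INR k * INR (pred t)) by (apply Rmult_le_compat_r; lra). nra.
Qed.

Lemma concl2 x : good x -> forall K : R, forall N : nat, exists n : nat,
  (N <= n)%nat /\ (1 <= n)%nat /\ avg T fF n x < K.
Proof.
  intros Hg K N. destruct (nat_above (- K)) as [kK HkK].
  destruct Hg as [R1 [R2 [R3 R4]]].
  assert (Hgood : good x) by (repeat split; auto; apply R4).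
  set (B := (N + kK + G x + 1)%nat).
  destruct (no_visit x B) as [k0 Hk0].
  destruct (R2 k0 1%nat) as [t1 [Ht1 Et1]].
  destruct (least_ex (fun t => (1 <= t)%nat /\ C k0 (Nat.iter t T x))) as [t0 [[Ht0 Ct0] Hmin]].
  { exists t1. split; auto. exists k0; split; auto. }
  assert (HtB : (t0 > B)%nat).
  { destruct (Nat.le_gt_cases t0 B); auto. exfalso. apply (Hk0 t0); auto. }
  set (n := pred t0). assert (Hn0 : n = pred t0) by reflexivity. clearbody n.
  exists n. split; [unfold B in *; lia|split; [unfold B in *; lia|]].
  set (y := Nat.iter n T x). assert (Hy0 : y = Nat.iter n T x) by reflexivity. clearbody y.
  destruct Ct0 as [j [Hj Ej]].
  assert (Hm : m y = rhoC j y).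
  { apply m_spec. rewrite Hy0, <- iter_S. replace (S n) with t0 by lia. auto. }
  assert (Hpast : exists p, C j (Nat.iter p Tinv y)).
  { destruct (R1 j O) as [t [_ Et]]. exists (t + n)%nat. rewrite Hy0, iter_TinvT by lia.
    replace (t + n - n)%nat with t by lia. exists j; split; auto. }
  destruct (firstit_spec Tinv (C j) y Hpast) as [Hc1 Hc2]. fold (rhoC j y) in Hc1, Hc2.
  assert (Hrn : (n <= rhoC j y)%nat).
  { destruct (Nat.le_gt_cases n (rhoC j y)) as [|Hlt]; auto. exfalso.
    rewrite Hy0 in Hc1 at 2. rewrite iter_TinvT' in Hc1 by lia.
    apply (Hmin (n - rhoC j y)%nat). lia.
    split. lia. apply (C_mono k0 j); auto. }
  assert (HGy : (sumn (fun i => P (Nat.iter i T x)) n + n * n <= G y)%nat).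
  { unfold G. rewrite Hm. unfold Q.
    assert (sumn (fun i => P (Nat.iter i T x)) n = sumn (fun i => P (Nat.iter (S i) Tinv y)) n).
    { rewrite sumn_rev. apply sumn_ext. intros i Hi. rewrite Hy0, iter_TinvT' by lia. f_equal. f_equal. lia. }
    rewrite H. pose proof (sumn_mono (fun i => P (Nat.iter (S i) Tinv y)) n (rhoC j y) Hrn).
    pose proof (Nat.mul_le_mono n (rhoC j y) n (rhoC j y) Hrn Hrn). lia. }
  unfold avg. rewrite birk_fwd. rewrite <- Hy0.
  apply le_INR in HGy. rewrite plus_INR, mult_INR in HGy.
  assert (Hn : (kK + G x + 1 <= n)%nat) by (unfold B in *; lia).
  apply le_INR in Hn. rewrite !plus_INR in Hn. simpl (INR 1) in Hn.
  pose proof (pos_INR (G x)). pose proof (pos_INR kK).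
  apply div_lt. lra. nra.
Qed.

Lemma main_abstract : exists f : X -> R, measurable_fun M f /\
    ae M mu (fun x =>
      (forall K : R, forall N : nat, exists n : nat,
         (N <= n)%nat /\ (1 <= n)%nat /\ K < avg T f n x) /\
      (forall K : R, forall N : nat, exists n : nat,
         (N <= n)%nat /\ (1 <= n)%nat /\ avg T f n x < K) /\
      (forall K : R, exists N : nat, forall n : nat,
         (N <= n)%nat -> (1 <= n)%nat -> K < avg Tinv f n x)).
Proof.
  exists fF. split. apply fF_meas.
  apply (ae_impl good). apply ae_good.
  intros x Hx. split; [apply concl1; auto|split; [apply concl2; auto|apply concl3; auto]].
Qed.
End Meas.

Theorem proposition1 (X : Type) (M : set X -> Prop) (mu : set X -> R)
  (T Tinv : X -> X)
  (HM : sigma_algebra M) (Hmu : probability_measure M mu) (Hna : non_atomic M mu)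
  (HT : invertible_with M T Tinv) (Hmp : measure_preserving M mu T)
  (Herg : ergodic M mu T) :
  exists f : X -> R, measurable_fun M f /\
    ae M mu (fun x =>
      (* limsup_n A_n^+ f (x) = +oo *)
      (forall K : R, forall N : nat, exists n : nat,
         (N <= n)%nat /\ (1 <= n)%nat /\ K < avg T f n x) /\
      (* liminf_n A_n^+ f (x) = -oo *)
      (forall K : R, forall N : nat, exists n : nat,
         (N <= n)%nat /\ (1 <= n)%nat /\ avg T f n x < K) /\
      (* lim_n A_n^- f (x) = +oo *)
      (forall K : R, exists N : nat, forall n : nat,
         (N <= n)%nat -> (1 <= n)%nat -> K < avg Tinv f n x)).
Proof.
  destruct (build_EZ X M mu HM Hmu Hna) as [E [Z [H1 [H2 [H3 [H4 [H5 [H6 H7]]]]]]]].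
  exact (main_abstract X M mu HM Hmu T Tinv HT Hmp Herg E Z H1 H2 H3 H4 H5 H6 H7).
Qed.
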